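(* Suppose $f$ satisfies Assumption 1, $u_c$ satisfies Assumption 2, and $U:\mathbb{R}^n\times[0,\infty)\to\mathbb{R}^m$ is StL. Then $\bar F^E_U$ is EPC with $\bar F^e_U$, where $\bar F^E_U(x,T):=x+Tf(x,U(x,T))$ and $\bar F^e_U(x,T):=F^e(x,U(x,T),T)$.
   Context: Assumption 1: $f(0,0)=0$ and for every $M,M_u\ge0$ there is $L>0$ with $|f(x,u)-f(y,v)|\le L(|x-y|+|u-v|)$ for $|x|,|y|\le M$, $|u|,|v|\le M_u$. Assumption 2: $u_c(0)=0$ and for every $M\ge0$ there is $L>0$ with $|u_c(x)-u_c(y)|\le L|x-y|$ for $|x|,|y|\le M$. $F^e(x,u,T)$: time-$T$ value of the solution of $\dot z=f(z,u)$ with constant $u$ and $z(0)=x$. StL: for each $M\ge0$ there exist $K(M)>0$, $T^*(M)>0$ ($T^*$ nonincreasing) with $U(0,T)=0$ and $|U(x,T)-U(y,T)|\le K|x-y|$ for $|x|,|y|\le M$, $T\in[0,T^* )$. EPC: $\bar F^a$ is EPC with $\bar F^b$ if for each $M\ge0$ there exist $K(M)>0$, $T^*(M)>0$, $\rho\in\mathcal{K}_\infty$ with $|\bar F^a(x,T)-\bar F^b(y,T)|\le(1+KT)|x-y|+T\rho(T)\max\{|x|,|y|\}$ for all $|x|,|y|\le M$, $T\in(0,T^* )$. *)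

(* Defs.v *)
From HB Require Import structures.
From mathcomp Require Import all_boot all_order all_algebra.
From mathcomp Require Import all_classical all_reals all_analysis.
Set Implicit Arguments. Unset Strict Implicit. Unset Printing Implicit Defensive.
Import Order.TTheory GRing.Theory Num.Theory.
Import numFieldNormedType.Exports.
Local Open Scope classical_set_scope.
Local Open Scope ring_scope.

Section Defs.
Variable R : realType.

Definition enorm (n : nat) (v : 'rV[R]_n) : R := Num.sqrt (\sum_(i < n) v 0 i ^+ 2).

Definition assumption1 (n m : nat) (f : 'rV[R]_n -> 'rV[R]_m -> 'rV[R]_n) : Prop :=
  f 0 0 = 0 /\
  forall M Mu : R, 0 <= M -> 0 <= Mu -> exists L : R, 0 < L /\
    forall (x y : 'rV[R]_n) (u v : 'rV[R]_m),
      enorm x <= M -> enorm y <= M -> enorm u <= Mu -> enorm v <= Mu ->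
      enorm (f x u - f y v) <= L * (enorm (x - y) + enorm (u - v)).

Definition assumption2 (n m : nat) (uc : 'rV[R]_n -> 'rV[R]_m) : Prop :=
  uc 0 = 0 /\
  forall M : R, 0 <= M -> exists L : R, 0 < L /\
    forall x y : 'rV[R]_n, enorm x <= M -> enorm y <= M ->
      enorm (uc x - uc y) <= L * enorm (x - y).

Definition StL (n m : nat) (U : 'rV[R]_n -> R -> 'rV[R]_m) : Prop :=
  exists K Tstar : R -> R,
    (forall M1 M2, 0 <= M1 -> M1 <= M2 -> Tstar M2 <= Tstar M1) /\
    forall M : R, 0 <= M ->
      0 < K M /\ 0 < Tstar M /\
      forall T : R, 0 <= T -> T < Tstar M ->
        U 0 T = 0 /\
        forall x y : 'rV[R]_n, enorm x <= M -> enorm y <= M ->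
          enorm (U x T - U y T) <= K M * enorm (x - y).

Definition class_Kinf (rho : R -> R) : Prop :=
  {within [set t | 0 <= t], continuous rho} /\
  rho 0 = 0 /\
  (forall a b : R, 0 <= a -> a < b -> rho a < rho b) /\
  (forall r : R, exists s : R, 0 <= s /\ r < rho s).

Definition EPC (n : nat) (Fa Fb : 'rV[R]_n -> R -> 'rV[R]_n) : Prop :=
  forall M : R, 0 <= M -> exists (K Tstar : R) (rho : R -> R),
    0 < K /\ 0 < Tstar /\ class_Kinf rho /\
    forall (x y : 'rV[R]_n) (T : R), enorm x <= M -> enorm y <= M ->
      0 < T -> T < Tstar ->
      enorm (Fa x T - Fb y T) <=
        (1 + K * T) * enorm (x - y) + T * rho T * Num.max (enorm x) (enorm y).

Definition ode_sol (n m : nat) (f : 'rV[R]_n -> 'rV[R]_m -> 'rV[R]_n)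
    (x : 'rV[R]_n) (u : 'rV[R]_m) (T : R) (z : R -> 'rV[R]_n) : Prop :=
  z 0 = x /\
  {within [set t | 0 <= t <= T], continuous z} /\
  forall t : R, 0 < t -> t < T -> is_derive t (1 : R) z (f (z t) u).

(* Fe is the exact time-T map F^e: its value is z(T) whenever a solution
   on [0,T] exists (unique by local Lipschitzness). *)
Definition exact_map (n m : nat) (f : 'rV[R]_n -> 'rV[R]_m -> 'rV[R]_n)
    (Fe : 'rV[R]_n -> 'rV[R]_m -> R -> 'rV[R]_n) : Prop :=
  forall x u T z, 0 <= T -> ode_sol f x u T z -> Fe x u T = z T.

Definition FbarE (n m : nat) (f : 'rV[R]_n -> 'rV[R]_m -> 'rV[R]_n)
    (U : 'rV[R]_n -> R -> 'rV[R]_m) : 'rV[R]_n -> R -> 'rV[R]_n :=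
  fun x T => x + T *: f x (U x T).

Definition Fbare (n m : nat) (Fe : 'rV[R]_n -> 'rV[R]_m -> R -> 'rV[R]_n)
    (U : 'rV[R]_n -> R -> 'rV[R]_m) : 'rV[R]_n -> R -> 'rV[R]_n :=
  fun x T => Fe x (U x T) T.

End Defs.

(* Main.v *)
Require Import Defs.
From HB Require Import structures.
From mathcomp Require Import all_boot all_order all_algebra.
From mathcomp Require Import all_classical all_reals all_analysis.
From mathcomp Require Import ring lra.
Set Implicit Arguments. Unset Strict Implicit. Unset Printing Implicit Defensive.
Import Order.TTheory GRing.Theory Num.Theory.
Import numFieldNormedType.Exports.
Local Open Scope classical_set_scope.
Local Open Scope ring_scope.
Section Int.
Context {R : realType}.
Notation mu := (@lebesgue_measure R).

Lemma cint (h : R -> R) a b : continuous h -> mu.-integrable `[a, b] (EFin \o h).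
Proof.
move=> ch; apply: continuous_compact_integrable; first exact: segment_compact.
exact: continuous_subspaceT.
Qed.

Lemma cintS (h : R -> R) a b (i : interval R) : [set` i] `<=` `[a, b] ->
  continuous h -> mu.-integrable [set` i] (EFin \o h).
Proof.
by move=> DS ch; apply: integrableS (cint a b ch) => //; exact: measurable_itv.
Qed.

Lemma Rint_bound a b (i : interval R) (h : R -> R) (C : R) : [set` i] `<=` `[a, b] ->
  continuous h -> (forall s, [set` i] s -> `|h s| <= C) ->
  `|\int[mu]_(s in [set` i]) h s| <= C * fine (mu [set` i]).
Proof.
move=> DS ch hC.
apply: (le_trans (le_normr_Rintegral _ _)) => //; first exact: (cintS DS ch).
have -> : C * fine (mu [set` i]) = \int[mu]_(s in [set` i]) (cst C s).
  by rewrite Rintegral_cst.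
apply: le_Rintegral => //.
- exact: (integrable_norm (cintS DS ch)).
- apply: (cintS DS); exact: cst_continuous.
Qed.

Definition I (h : R -> R) (t : R) := \int[mu]_(s in `[0, t]) h s.

Lemma I0 h : I h 0 = 0.
Proof. by rewrite /I set_itv1 Rintegral_set1. Qed.

Lemma ID h1 h2 t : continuous h1 -> continuous h2 ->
  I (fun s => h1 s - h2 s) t = I h1 t - I h2 t.
Proof.
move=> c1 c2; rewrite /I RintegralB //; exact: cint.
Qed.

Lemma mu_itv (a b : R) : a <= b -> fine (mu `[a, b]) = b - a.
Proof.
rewrite le_eqVlt => /predU1P[->|ab]; rewrite lebesgue_measure_itv /= lte_fin.
  by rewrite ltxx subrr.
by rewrite ab.
Qed.

Lemma mu_itv_oc (a b : R) : a <= b -> fine (mu `]a, b]) = b - a.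
Proof.
rewrite le_eqVlt => /predU1P[->|ab]; rewrite lebesgue_measure_itv /= lte_fin.
  by rewrite ltxx subrr.
by rewrite ab.
Qed.

Lemma Icst c t : 0 <= t -> I (cst c) t = c * t.
Proof.
move=> t0; rewrite /I Rintegral_cst //.
have := mu_itv t0; rewrite subr0 => E.
congr (_ * _); exact: E.
Qed.

Lemma Ilip h (C : R) a b : continuous h -> (forall s, `|h s| <= C) -> 0 <= a -> a <= b ->
  `|I h b - I h a| <= C * (b - a).
Proof.
move=> ch hC a0 ab.
rewrite /I Rintegral_itvB; last 3 first.
- exact: cint.
- by rewrite bnd_simp.
- by rewrite bnd_simp.
apply: le_trans (Rint_bound (a:=0) (b:=b) _ ch (fun s _ => hC s)) _.
  by apply: subset_itvr; rewrite bnd_simp.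
have := mu_itv_oc ab => E.
by rewrite le_eqVlt; apply/orP; left; apply/eqP; congr (_ * _); exact: E.
Qed.


Lemma Ider (h : R -> R) (t T : R) : continuous h -> 0 < t -> t < T ->
  derivable (I h) t 1 /\ derive1 (I h) t = h t.
Proof.
move=> ch t0 tT.
exact: (@continuous_FTC1_closed R h 0 t T tT (cint 0 T ch) t0 (ch t)).
Qed.

End Int.

Lemma eqle {R : realType} (x y : R) : x = y -> x <= y.
Proof. by move=> ->. Qed.

Section Norms.
Context {R : realType}.

Lemma lipcont (V W : normedModType R) (f : V -> W) (K : R) :
  (forall a b, `|f a - f b| <= K * `|a - b|) -> continuous f.
Proof.
move=> fK x; apply/cvgrPdist_lt => e e0.
have K1 : 0 < `|K| + 1 by rewrite ltr_wpDl.
have HK : K <= `|K| + 1 by rewrite (le_trans (ler_norm K)) // lerDl.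
near=> z.
apply: (le_lt_trans (fK x z)).
apply: (@le_lt_trans _ _ ((`|K| + 1) * `|x - z|)).
  by apply: ler_wpM2r.
rewrite -ltr_pdivlMl //.
near: z; apply: cvgr_dist_lt; [exact: cvg_id | by rewrite mulr_gt0 // invr_gt0].
Unshelve. all: by end_near. Qed.

Lemma entry_le n (v : 'rV[R]_n) j : `|v 0 j| <= `|v|.
Proof.
rewrite [X in _ <= X]/Num.Def.normr /= mx_normrE.
exact: (le_bigmax _ _ (0, j)).
Qed.

Lemma row_le n (v : 'rV[R]_n) (C : R) : 0 <= C -> (forall j, `|v 0 j| <= C) -> `|v| <= C.
Proof.
move=> C0 vC; rewrite [X in X <= _]/Num.Def.normr /= mx_normrE.
apply: bigmax_le => //= -[i j] _ /=.
by rewrite (ord1 i).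
Qed.

End Norms.

Section Seq.
Context {R : realType} (n : nat).
Local Notation q := ((2:R)^-1).

Lemma geo (u : nat -> 'rV[R]_n) (c : nat -> R) :
  (forall k m, (k <= m)%N -> `|u m - u k| <= c k) -> c @ \oo --> 0 -> cvgn u.
Proof.
move=> uc c0.
apply/cauchy_cvgP/cauchy_ballP => e e0.
have e2 : 0 < e / 2 by rewrite divr_gt0.
move/cvgrPdist_lt: c0 => /(_ _ e2) [N _ HN].
exists ([set x | exists2 k, (N <= k)%N & u k = x], [set x | exists2 k, (N <= k)%N & u k = x]) => /=.
  by split; exists N => // k /= Nk; exists k.
move=> [x y] [/= [k Nk <-] [m Nm <-]].
rewrite -ball_normE /ball_ /=.
have uk := uc N k Nk; have um := uc N m Nm.
have cN : c N < e / 2 by have := HN N (leqnn N); rewrite sub0r normrN => /(le_lt_trans (ler_norm _)).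
have a1 : `|u N - u k| < e / 2 by rewrite distrC; exact: le_lt_trans uk cN.
have a2 : `|u m - u N| < e / 2 by exact: le_lt_trans um cN.
have a3 : `|u k - u N| < e / 2 by exact: le_lt_trans uk cN.
have a4 : `|u N - u m| < e / 2 by rewrite distrC; exact: le_lt_trans um cN.
rewrite -(subrKA (u N)).
apply: le_lt_trans (ler_normD _ _) _.
rewrite [e](splitr e).
by apply: ltrD.
Qed.

Lemma lim_bound (u : nat -> 'rV[R]_n) (l : 'rV[R]_n) k (C : R) : u @ \oo --> l ->
  (forall m, (k <= m)%N -> `|u m - u k| <= C) -> `|l - u k| <= C.
Proof.
move=> ul uC.
have h : (fun m => `|u m - u k|) @ \oo --> `|l - u k|.
  by apply: cvg_norm; apply: cvgB => //; exact: cvg_cst.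
rewrite -(cvg_lim _ h) //; apply: limr_le; first by apply/cvg_ex; exists `|l - u k|.
by exists k => // m /= km; apply: uC.
Qed.

Lemma tele (u : nat -> 'rV[R]_n) (C : R) : 0 <= C ->
  (forall k, `|u k.+1 - u k| <= C * q ^+ k) ->
  forall k m, (k <= m)%N -> `|u m - u k| <= 2 * C * q ^+ k.
Proof.
move=> C0 uC k m km.
have H : forall j, `|u (k + j)%N - u k| <= 2 * C * q ^+ k - 2 * C * q ^+ (k + j).
  elim=> [|j IH]; first by rewrite addn0 subrr normr0 subrr.
  rewrite addnS -(subrKA (u (k + j)%N)).
  apply: le_trans (ler_normD _ _) _.
  rewrite exprS.
  have -> : 2 * C * (q * q ^+ (k + j)) = C * q ^+ (k + j).
    by rewrite mulrA [2 * C * q]mulrAC mulfV ?mul1r // pnatr_eq0.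
  apply: le_trans (lerD (uC _) IH) _.
  by rewrite le_eqVlt; apply/orP; left; apply/eqP; ring.
rewrite -(subnKC km).
apply: le_trans (H (m - k)%N) _.
rewrite lerBlDr lerDl.
by rewrite !mulr_ge0 // exprn_ge0 // invr_ge0.
Qed.

End Seq.

Lemma subDD {R : realType} (a b c : R) : (a + b) - (a + c) = b - c.
Proof. by ring. Qed.

Lemma is_derive_row {R : realType} n (F : R -> 'rV[R]_n) (t : R) (d : 'rV[R]_n) :
  (forall j, is_derive t 1 (fun s => F s 0 j) (d 0 j)) -> is_derive t 1 F d.
Proof.
move=> H.
have dF : derivable F t 1.
  apply/derivable_mxP => i j; rewrite (ord1 i); exact: (@ex_derive _ _ _ _ _ _ _ (H j)).
apply: DeriveDef => //.
rewrite derive_mx //; apply/matrixP => i j; rewrite mxE (ord1 i).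
exact: (@derive_val _ _ _ _ _ _ _ (H j)).
Qed.

Section Picard.
Context {R : realType} (n : nat) (g : 'rV[R]_n -> 'rV[R]_n) (y : 'rV[R]_n) (L B T : R).
Hypotheses (T0 : 0 <= T) (L0 : 0 <= L) (B0 : 0 <= B) (TL : T * L <= 2^-1)
  (gL : forall a b, `|g a - g b| <= L * `|a - b|) (gB : forall a, `|g a| <= B).
Local Notation q := ((2:R)^-1).

Definition clamp (t : R) := Num.min (Num.max t 0) T.

Lemma clamp_cases t : (t <= 0 /\ clamp t = 0) \/ (0 <= t <= T /\ clamp t = t)
  \/ (T <= t /\ clamp t = T).
Proof.
rewrite /clamp; have [t0|t0] := leP t 0.
  by left; split => //; rewrite min_l.
have [tT|tT] := leP t T.
  by right; left; split => //; rewrite ltW.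
by right; right; split => //; exact: ltW.
Qed.

Lemma clamp_ge0 t : 0 <= clamp t.
Proof. by case: (clamp_cases t) => [[_ ->]|[[/andP[h _] ->]|[_ ->]]]. Qed.

Lemma clamp_le t : clamp t <= T.
Proof. by case: (clamp_cases t) => [[_ ->]|[[/andP[_ h] ->]|[_ ->]]]. Qed.

Lemma clamp_id t : 0 <= t -> t <= T -> clamp t = t.
Proof.
move=> t0 tT; have T1 := T0; case: (clamp_cases t) => [[h ->]|[[_ ->]|[h ->]]] //; apply/eqP;
  rewrite eq_le; apply/andP; split => //; lra.
Qed.

Lemma clamp_lip s t : clamp t - clamp s <= `|s - t|.
Proof.
have T1 := T0.
have h1 := ler_norm (s - t); have h2 := ler_norm (t - s); rewrite distrC in h2.
case: (clamp_cases s) => [[hs ->]|[[/andP[hs1 hs2] ->]|[hs ->]]];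
case: (clamp_cases t) => [[ht ->]|[[/andP[ht1 ht2] ->]|[ht ->]]]; lra.
Qed.

Definition hh (z : R -> 'rV[R]_n) (j : 'I_n) (s : R) := g (z s) 0 j.
Definition P (z : R -> 'rV[R]_n) (t : R) := y + \row_j I (hh z j) (clamp t).
Definition lipz (z : R -> 'rV[R]_n) (K : R) := forall s t, `|z s - z t| <= K * `|s - t|.

Lemma hh_lip z K j : lipz z K -> forall a b, `|hh z j a - hh z j b| <= L * K * `|a - b|.
Proof.
move=> zK a b.
have -> : hh z j a - hh z j b = (g (z a) - g (z b)) 0 j by rewrite /hh !mxE.
apply: le_trans (entry_le _ j) _; apply: le_trans (gL _ _) _.
by rewrite -mulrA ler_wpM2l.
Qed.

Lemma hh_cont z K j : lipz z K -> continuous (hh z j).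
Proof. by move=> zK; apply: (@lipcont R R^o R^o _ (L * K)) => a b; exact: hh_lip. Qed.

Lemma hhB_cont z w K1 K2 j : lipz z K1 -> lipz w K2 ->
  continuous (fun s => hh z j s - hh w j s).
Proof.
move=> zK wK; apply: (@lipcont R R^o R^o _ (L * K1 + L * K2)) => a b.
have -> : hh z j a - hh w j a - (hh z j b - hh w j b) =
  (hh z j a - hh z j b) - (hh w j a - hh w j b) by ring.
apply: le_trans (ler_normB _ _) _; rewrite mulrDl.
by apply: lerD; exact: hh_lip.
Qed.

Lemma hh_bound z j s : `|hh z j s| <= B.
Proof. exact: le_trans (entry_le _ j) (gB _). Qed.

Lemma P_lip z K : lipz z K -> lipz (P z) B.
Proof.
move=> zK s t; apply: row_le; first by rewrite mulr_ge0.
move=> j; rewrite /P !mxE subDD.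
have [le|le] := leP (clamp s) (clamp t).
  rewrite distrC; apply: le_trans (Ilip (hh_cont (j:=j) zK) (hh_bound z j) (clamp_ge0 _) le) _.
  by rewrite ler_wpM2l // clamp_lip.
apply: le_trans (Ilip (hh_cont (j:=j) zK) (hh_bound z j) (clamp_ge0 _) (ltW le)) _.
by rewrite ler_wpM2l // distrC clamp_lip.
Qed.

Lemma P0 z : P z 0 = y.
Proof. by apply/rowP => j; rewrite /P !mxE clamp_id // I0 addr0. Qed.

Lemma P_y z K : lipz z K -> forall t, `|P z t - y| <= T * B.
Proof.
move=> zK t; apply: row_le; first by rewrite mulr_ge0.
move=> j; rewrite /P !mxE (addrC (y 0 j)) addrK.
rewrite -[I _ _]subr0 -(I0 (hh z j)).
apply: le_trans (Ilip (hh_cont (j:=j) zK) (hh_bound z j) (lexx 0) (clamp_ge0 t)) _.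
by rewrite subr0 [T * B]mulrC ler_wpM2l // clamp_le.
Qed.

Lemma P_contr z w K1 K2 (E : R) : lipz z K1 -> lipz w K2 ->
  (forall s, `|z s - w s| <= E) -> forall t, `|P z t - P w t| <= T * L * E.
Proof.
move=> zK wK zwE t.
have E0 : 0 <= E by apply: le_trans (normr_ge0 _) (zwE 0).
apply: row_le; first by rewrite !mulr_ge0.
move=> j; rewrite /P !mxE subDD -(ID _ (hh_cont (j:=j) zK) (hh_cont (j:=j) wK)).
rewrite -[I _ _]subr0 -(I0 (fun s => hh z j s - hh w j s)).
have hb : forall s, `|hh z j s - hh w j s| <= L * E.
  move=> s; have -> : hh z j s - hh w j s = (g (z s) - g (w s)) 0 j by rewrite /hh !mxE.
  apply: le_trans (entry_le _ j) _; apply: le_trans (gL _ _) _.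
  by rewrite ler_wpM2l.
apply: le_trans (Ilip (hhB_cont (j:=j) zK wK) hb (lexx 0) (clamp_ge0 t)) _.
have -> : T * L * E = L * E * T by ring.
by rewrite subr0 ler_wpM2l ?mulr_ge0 // clamp_le.
Qed.

Lemma P_cst t : P (cst y) t = y + clamp t *: g y.
Proof.
apply/rowP => j; rewrite /P !mxE; congr (_ + _).
have -> : hh (cst y) j = cst (g y 0 j) by [].
by rewrite Icst ?clamp_ge0 // mulrC.
Qed.

Lemma P_der z K : lipz z K -> forall t, 0 < t -> t < T -> is_derive t 1 (P z) (g (z t)).
Proof.
move=> zK t t0 tT; apply: is_derive_row => j.
have [d1 d2] := Ider (hh_cont (j:=j) zK) t0 tT.
have D0 : is_derive t 1 (I (hh z j)) (hh z j t).
  by have := derivableP d1; rewrite -derive1E d2.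
have D1 : is_derive t 1 (cst (y 0 j) + I (hh z j)) (0 + hh z j t).
  by apply: is_deriveD.
rewrite add0r in D1.
apply: (near_eq_is_derive _ D1).
have e0 : 0 < Num.min t (T - t) by rewrite lt_min t0 subr_gt0 tT.
near=> s.
have hs : `|t - s| < Num.min t (T - t).
  by near: s; apply: cvgr_dist_lt => //; exact: cvg_id.
rewrite lt_min in hs; case/andP: hs => hs1 hs2.
rewrite ltr_distlC in hs1; rewrite ltr_distlC in hs2.
case/andP: hs1 => hs1 _; case/andP: hs2 => _ hs2.
rewrite /P !mxE clamp_id //; lra.
Unshelve. all: by end_near. Qed.

Definition zs (k : nat) : R -> 'rV[R]_n := iter k P (cst y).

Lemma lipz_cst : lipz (cst y) 0.
Proof. by move=> s t; rewrite /= subrr normr0 mul0r. Qed.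

Lemma zs_lip k : lipz (zs k) B.
Proof.
elim: k => [|k IH]; first by move=> s t; rewrite /zs /= subrr normr0 mulr_ge0.
exact: P_lip IH.
Qed.

Lemma zs_diff k t : `|zs k.+1 t - zs k t| <= T * B * q ^+ k.
Proof.
elim: k t => [|k IH] t.
  by rewrite expr0 mulr1; exact: (P_y lipz_cst t).
have H := P_contr (zs_lip k.+1) (zs_lip k) IH t.
apply: le_trans H _.
have X0 : 0 <= T * B * q ^+ k by rewrite !mulr_ge0 // exprn_ge0 // invr_ge0.
have -> : T * B * q ^+ k.+1 = q * (T * B * q ^+ k) by rewrite exprS; ring.
exact: ler_wpM2r.
Qed.

Definition cc (a : R) (k : nat) := a * q ^+ k.

Lemma cc0 a : cc a @ \oo --> 0.
Proof.
have q1 : `|q| < 1 by rewrite gtr0_norm ?invr_gt0 // invf_lt1 // ltr1n.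
have := cvg_geometric a q1.
by apply: cvg_trans; apply: near_eq_cvg; apply: nearW => k.
Qed.

Lemma zs_tele t k m : (k <= m)%N -> `|zs m t - zs k t| <= cc (2 * (T * B)) k.
Proof.
move=> km; rewrite /cc.
have TB0 : 0 <= T * B by rewrite mulr_ge0.
have := @tele R n (fun k => zs k t) (T * B) TB0 (fun k => zs_diff k t) k m km.
by [].
Qed.

Lemma zs_cvg t : cvgn (fun k => zs k t).
Proof. exact: (geo (@zs_tele t) (cc0 _)). Qed.

Definition zl (t : R) : 'rV[R]_n := limn (fun k => zs k t).

Lemma zl_bound t k : `|zl t - zs k t| <= cc (2 * (T * B)) k.
Proof. apply: (lim_bound _ (fun m km => zs_tele t km)). exact: zs_cvg. Qed.

Lemma zl_lip : lipz zl B.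
Proof.
move=> s t.
have h : (fun k => `|zs k s - zs k t|) @ \oo --> `|zl s - zl t|.
  by apply: cvg_norm; apply: cvgB; exact: zs_cvg.
rewrite -(cvg_lim _ h) //; apply: limr_le; first by apply/cvg_ex; exists `|zl s - zl t|.
by apply: nearW => k; exact: zs_lip.
Qed.

Lemma zl_fix t : P zl t = zl t.
Proof.
apply/eqP; rewrite -subr_eq0 -normr_eq0 eq_le normr_ge0 andbT.
have TB0 : 0 <= T * B by rewrite mulr_ge0.
have hq : 0 <= q by rewrite invr_ge0.
have H : forall k, `|P zl t - zl t| <= cc (4 * (T * B)) k.
  move=> k.
  have h1 := P_contr zl_lip (zs_lip k) (fun s => zl_bound s k) t.
  have h2 := zl_bound t k.+1.
  have -> : P zl t - zl t = (P zl t - zs k.+1 t) + (zs k.+1 t - zl t) by rewrite subrKA.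
  apply: le_trans (ler_normD _ _) _.
  rewrite distrC in h2.
  apply: le_trans (lerD h1 h2) _.
  rewrite /cc exprS.
  have X0 : 0 <= q ^+ k by rewrite exprn_ge0.
  have Y : T * L * (2 * (T * B) * q ^+ k) <= 2^-1 * (2 * (T * B) * q ^+ k).
    by apply: ler_wpM2r; rewrite ?mulr_ge0.
  have Z : 2^-1 * (2 * (T * B) * q ^+ k) = T * B * q ^+ k.
    by field.
  rewrite Z in Y.
  have W : 2 * (T * B) * (q * q ^+ k) <= T * B * q ^+ k.
    by rewrite le_eqVlt; apply/orP; left; apply/eqP; field.
  have V : 0 <= T * B * q ^+ k by rewrite mulr_ge0.
  lra.
have c0 := cc0 (4 * (T * B)).
rewrite -(cvg_lim _ c0) //; apply: limr_ge; first by apply/cvg_ex; exists 0.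
by apply: nearW.
Qed.

Lemma picard : exists z : R -> 'rV[R]_n, z 0 = y /\ continuous z /\
  (forall t, 0 < t -> t < T -> is_derive t 1 z (g (z t))) /\
  (forall t, `|z t - y| <= T * B) /\ `|z T - y - T *: g y| <= T * L * (T * B).
Proof.
exists zl.
have fx : P zl = zl by apply: funext => t; exact: zl_fix.
split; first by rewrite -fx; exact: P0.
split; first exact: (@lipcont R R^o _ zl B zl_lip).
split; first by move=> t t0 tT; have := P_der zl_lip t0 tT; rewrite fx.
split; first by move=> t; rewrite -fx; exact: (P_y zl_lip t).
have -> : zl T - y - T *: g y = P zl T - P (cst y) T.
  by rewrite P_cst clamp_id // fx opprD addrA.
apply: (P_contr zl_lip lipz_cst) => s.
by rewrite -fx; exact: (P_y zl_lip s).
Qed.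

End Picard.

Section Enorm.
Context {R : realType} (n : nat).
Implicit Types (u v : 'rV[R]_n).

Local Notation en := (@enorm R n).

Lemma sumsq_ge0 v : 0 <= \sum_(i < n) v 0 i ^+ 2.
Proof. by apply: sumr_ge0 => i _; exact: sqr_ge0. Qed.

Lemma en_ge0 v : 0 <= en v.
Proof. exact: sqrtr_ge0. Qed.

Lemma en_sq v : en v ^+ 2 = \sum_(i < n) v 0 i ^+ 2.
Proof. by rewrite /enorm sqr_sqrtr // sumsq_ge0. Qed.

Lemma en_max v : `|v| <= en v.
Proof.
apply: row_le; first exact: en_ge0.
move=> j; rewrite -sqrtr_sqr /en ler_sqrt ?sumsq_ge0 //.
rewrite (bigD1 j) //= lerDl; apply: sumr_ge0 => i _; exact: sqr_ge0.
Qed.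

Lemma en_c v : en v <= n.+1%:R * `|v|.
Proof.
have h0 : 0 <= n.+1%:R * `|v| by rewrite mulr_ge0.
rewrite -(ler_pXn2r (n:=2)) //; last by rewrite nnegrE en_ge0.
rewrite en_sq.
apply: le_trans (_ : \sum_(i < n) `|v| ^+ 2 <= _).
  apply: ler_sum => i _; rewrite -real_normK ?num_real //.
  by rewrite lerXn2r ?nnegrE ?normr_ge0 // entry_le.
rewrite sumr_const card_ord exprMn -[_ *+ n]mulr_natl.
apply: ler_wpM2r; first exact: sqr_ge0.
rewrite -natrX ler_nat.
by rewrite expnS expn1 (leq_trans (leqnSn n)) // leq_pmulr.
Qed.

Lemma en_scale (a : R) v : en (a *: v) = `|a| * en v.
Proof.
rewrite /enorm -sqrtr_sqr -sqrtrM ?sqr_ge0 // mulr_sumr.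
by congr Num.sqrt; apply: eq_bigr => i _; rewrite mxE exprMn.
Qed.

Lemma en_opp v : en (- v) = en v.
Proof. by rewrite -scaleN1r en_scale normrN normr1 mul1r. Qed.

Lemma en0 : en 0 = 0.
Proof. by rewrite -(scale0r (0 : 'rV[R]_n)) en_scale normr0 mul0r. Qed.

Lemma cs u v : \sum_(i < n) u 0 i * v 0 i <= en u * en v.
Proof.
set S := \sum_(i < n) u 0 i * v 0 i.
set a := en u; set b := en v.
have a0 : 0 <= a := en_ge0 u; have b0 : 0 <= b := en_ge0 v.
have H : 2 * (a * b) * S <= 2 * (a * b) ^+ 2.
  have E : \sum_(i < n) (2 * (a * b) * (u 0 i * v 0 i)) <=
           \sum_(i < n) (u 0 i ^+ 2 * b ^+ 2 + v 0 i ^+ 2 * a ^+ 2).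
    apply: ler_sum => i _.
    have := sqr_ge0 (u 0 i * b - v 0 i * a).
    by rewrite -subr_ge0 => h; rewrite -subr_ge0; apply: le_trans h _; apply/eqle; ring.
  rewrite -mulr_sumr in E; rewrite big_split /= -!mulr_suml -!en_sq in E.
  by apply: le_trans E _; apply/eqle; rewrite /a /b; ring.
have [ab0|ab0] := eqVneq (a * b) 0.
  suff -> : S = 0 by rewrite ab0.
  move/eqP: ab0; rewrite mulf_eq0 => /orP[] /eqP h.
  - have h1 : \sum_(i < n) u 0 i ^+ 2 = 0 by rewrite -en_sq -/a h expr0n.
    have h2 := psumr_eq0P (fun i _ => sqr_ge0 (u 0 i)) h1.
    rewrite /S big1 // => i _; have := h2 i isT; move/eqP; rewrite sqrf_eq0 => /eqP ->.
    by rewrite mul0r.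
  - have h1 : \sum_(i < n) v 0 i ^+ 2 = 0 by rewrite -en_sq -/b h expr0n.
    have h2 := psumr_eq0P (fun i _ => sqr_ge0 (v 0 i)) h1.
    rewrite /S big1 // => i _; have := h2 i isT; move/eqP; rewrite sqrf_eq0 => /eqP ->.
    by rewrite mulr0.
have abp : 0 < 2 * (a * b) by rewrite mulr_gt0 // lt_def ab0 mulr_ge0.
by rewrite -(ler_pM2l abp); apply: (le_trans H); apply/eqle; ring.
Qed.

Lemma en_tri u v : en (u + v) <= en u + en v.
Proof.
have h0 : 0 <= en u + en v by rewrite addr_ge0 ?en_ge0.
rewrite -(ler_pXn2r (n:=2)) //; last by rewrite nnegrE en_ge0.
rewrite en_sq.
have E : \sum_(i < n) (u + v) 0 i ^+ 2 =
  \sum_(i < n) u 0 i ^+ 2 + \sum_(i < n) v 0 i ^+ 2 + 2 * \sum_(i < n) u 0 i * v 0 i.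
  rewrite mulr_sumr -!big_split /=; apply: eq_bigr => i _; rewrite mxE; ring.
rewrite E -!en_sq.
have := cs u v; move=> h.
have -> : (en u + en v) ^+ 2 = en u ^+ 2 + en v ^+ 2 + 2 * (en u * en v) by ring.
by rewrite lerD2l ler_wpM2l.
Qed.


End Enorm.

Notation en := enorm.

Section Proj.
Context {R : realType}.

Definition clp (a b x : R) := Num.min (Num.max x a) b.

Lemma clp_cases a b x : a <= b -> (x <= a /\ clp a b x = a) \/ (a <= x <= b /\ clp a b x = x)
  \/ (b <= x /\ clp a b x = b).
Proof.
move=> ab; rewrite /clp; have [xa|xa] := leP x a.
  by left; split => //; rewrite min_l.
have [xb|xb] := leP x b.
  by right; left; split => //; rewrite ltW.
by right; right; split => //; exact: ltW.
Qed.

Lemma clp_lip a b x1 x2 : a <= b -> `|clp a b x1 - clp a b x2| <= `|x1 - x2|.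
Proof.
move=> ab; rewrite ler_norml.
have h1 := ler_norm (x1 - x2); have h2 := ler_norm (x2 - x1); rewrite distrC in h2.
case: (clp_cases x1 ab) => [[hs ->]|[[/andP[hs1 hs2] ->]|[hs ->]]];
case: (clp_cases x2 ab) => [[ht ->]|[[/andP[ht1 ht2] ->]|[ht ->]]]; apply/andP; split; lra.
Qed.

Lemma clp_in a b x : a <= b -> a <= clp a b x <= b.
Proof.
move=> ab; case: (clp_cases x ab) => [[hs ->]|[[/andP[hs1 hs2] ->]|[hs ->]]];
  apply/andP; split; lra.
Qed.

Lemma clp_id a b x : a <= x -> x <= b -> clp a b x = x.
Proof.
move=> ax xb; have ab : a <= b by apply: le_trans ax xb.
case: (clp_cases x ab) => [[hs ->]|[[/andP[hs1 hs2] ->]|[hs ->]]]; apply/eqP;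
  rewrite eq_le; apply/andP; split; lra.
Qed.

Variables (n : nat) (y : 'rV[R]_n) (r : R).
Hypothesis r0 : 0 <= r.

Definition proj (w : 'rV[R]_n) : 'rV[R]_n := \row_j clp (y 0 j - r) (y 0 j + r) (w 0 j).

Lemma rr j : y 0 j - r <= y 0 j + r.
Proof. have := r0; lra. Qed.

Lemma proj_lip w1 w2 : `|proj w1 - proj w2| <= `|w1 - w2|.
Proof.
apply: row_le => // j; rewrite !mxE.
apply: le_trans (clp_lip _ _ (rr j)) _.
have := entry_le (w1 - w2) j; by rewrite !mxE.
Qed.

Lemma proj_in w : `|proj w - y| <= r.
Proof.
apply: row_le => // j; rewrite !mxE.
have /andP[h1 h2] := clp_in (w 0 j) (rr j).
rewrite ler_norml; apply/andP; split; lra.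
Qed.

Lemma proj_id w : `|w - y| <= r -> proj w = w.
Proof.
move=> wy; apply/rowP => j; rewrite !mxE.
have := le_trans (entry_le (w - y) j) wy; rewrite !mxE ler_norml => /andP[h1 h2].
apply: clp_id; lra.
Qed.

End Proj.

Lemma subr_mid {R : realType} n (p q w : 'rV[R]_n) : p - w = (p - q) - (w - q).
Proof. by rewrite opprB addrA subrK. Qed.

Theorem lemma2 (R : realType) (n m : nat)
  (f : 'rV[R]_n -> 'rV[R]_m -> 'rV[R]_n) (uc : 'rV[R]_n -> 'rV[R]_m)
  (U : 'rV[R]_n -> R -> 'rV[R]_m) (Fe : 'rV[R]_n -> 'rV[R]_m -> R -> 'rV[R]_n) :
  assumption1 f -> assumption2 uc -> StL U -> exact_map f Fe ->
  EPC (FbarE f U) (Fbare Fe U).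
Proof.
move=> [f00 fL] _ [K [Ts [_ HU]]] Fex M M0.
have [KM0 [TM0 HUT]] := HU M M0.
pose c : R := n.+1%:R.
have c0 : 0 < c by rewrite ltr0n.
have c1 : 1 <= c by rewrite ler1n.
have M1 : 0 <= 2 * c * M by rewrite !mulr_ge0 // ltW.
have Mu0 : 0 <= K M * M by rewrite mulr_ge0 // ltW.
have [L [L0 fLL]] := fL _ _ M1 Mu0.
pose A := L * c * (2 + K M).
have KM1 : 0 < 2 + K M by rewrite addr_gt0.
have A0 : 0 < A by rewrite !mulr_gt0.
pose s := c * (L * c) * A.
have s0 : 0 < s by rewrite !mulr_gt0.
exists (L * (1 + K M)), (Num.min (Ts M) (2 * A)^-1), (fun t => s * t).
split; first by rewrite mulr_gt0 // addr_gt0.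
split; first by rewrite lt_min TM0 invr_gt0 mulr_gt0.
split.
  split.
    apply: continuous_subspaceT; apply: (@lipcont R R^o R^o _ s) => a b.
    by rewrite -mulrBr normrM gtr0_norm.
  split; first by rewrite mulr0.
  split; first by move=> a b _ ab; rewrite ltr_pM2l.
  move=> r; exists ((`|r| + 1) / s); split; first by rewrite divr_ge0 // ?addr_ge0 // ltW.
  rewrite mulrC divfK ?gt_eqF //; have := ler_norm r; lra.
move=> x y T xM yM T0 TT.
have [TM TA] : T < Ts M /\ T < (2 * A)^-1 by move: TT; rewrite lt_min => /andP[].
have [U0 ULip] := HUT T (ltW T0) TM.
have e0M : en (0 : 'rV[R]_n) <= M by rewrite en0.
have Ux : en (U x T) <= K M * en x.
  by have := ULip x 0 xM e0M; rewrite U0 !subr0.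
have Uy : en (U y T) <= K M * en y.
  by have := ULip y 0 yM e0M; rewrite U0 !subr0.
have Uxb : en (U x T) <= K M * M by apply: le_trans Ux _; rewrite ler_wpM2l // ltW.
have Uyb : en (U y T) <= K M * M by apply: le_trans Uy _; rewrite ler_wpM2l // ltW.
have Mc : M <= 2 * c * M.
  by rewrite -[X in X <= _]mul1r ler_wpM2r // (le_trans c1) // ler_peMl // ler1n.
have xM' : en x <= 2 * c * M by apply: le_trans xM Mc.
have yM' : en y <= 2 * c * M by apply: le_trans yM Mc.
have PA : en (x + T *: f x (U x T) - (y + T *: f y (U y T)))
    <= (1 + L * (1 + K M) * T) * en (x - y).
  rewrite opprD addrACA -scalerBr.
  apply: le_trans (en_tri _ _) _.
  rewrite en_scale gtr0_norm //.
  have h1 := fLL x y (U x T) (U y T) xM' yM' Uxb Uyb.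
  have h2 := ULip x y xM yM.
  have d0 := en_ge0 (x - y).
  have h3 : en (f x (U x T) - f y (U y T)) <= L * (1 + K M) * en (x - y).
    apply: le_trans h1 _; rewrite -mulrA; apply: ler_wpM2l; first exact: ltW.
    by rewrite mulrDl mul1r lerD2l.
  have h4 : T * en (f x (U x T) - f y (U y T)) <= T * (L * (1 + K M) * en (x - y)).
    by rewrite ler_wpM2l // ltW.
  apply: le_trans (lerD (lexx _) h4) _.
  by apply/eqle; ring.
pose u := U y T.
pose r := `|y|.
have r0 : 0 <= r := normr_ge0 y.
have ry : r <= en y := en_max y.
pose g := fun w => f (proj y r w) u.
have pn : forall w, en (proj y r w) <= c * (2 * r).
  move=> w; apply: le_trans (en_c _) _; apply: ler_wpM2l; first exact: ltW.
  have -> : proj y r w = (proj y r w - y) + y by rewrite subrK.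
  apply: le_trans (ler_normD _ _) _.
  by have := proj_in y r0 w; rewrite /r; lra.
have pM : forall w, en (proj y r w) <= 2 * c * M.
  move=> w; apply: le_trans (pn w) _.
  have : r <= M by apply: le_trans ry yM.
  move=> h; have := ltW c0; nra.
have gL : forall a b, `|g a - g b| <= L * c * `|a - b|.
  move=> a b; apply: le_trans (en_max _) _.
  have := fLL _ _ u u (pM a) (pM b) Uyb Uyb.
  rewrite subrr en0 addr0 => h; apply: le_trans h _.
  rewrite -mulrA; apply: ler_wpM2l; first exact: ltW.
  apply: le_trans (en_c _) _; apply: ler_wpM2l; first exact: ltW.
  exact: proj_lip.
have gB : forall a, `|g a| <= A * r.
  move=> a; apply: le_trans (en_max _) _.
  have h0 : en (0 : 'rV[R]_m) <= K M * M by rewrite en0.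
  have h00 : en (0 : 'rV[R]_n) <= 2 * c * M by rewrite en0.
  have := fLL _ 0 u 0 (pM a) h00 Uyb h0.
  rewrite f00 !subr0 => h; apply: le_trans h _.
  have hu : en u <= K M * (c * r).
    apply: le_trans Uy _; rewrite ler_wpM2l ?(ltW KM0) //.
    have := en_c y; by rewrite /r.
  have := pn a; rewrite /A => hp.
  have h5 : en (proj y r a) + en u <= c * (2 * r) + K M * (c * r) by apply: lerD.
  apply: le_trans (ler_wpM2l (ltW L0) h5) _.
  by apply/eqle; ring.
have TA2 : T * (2 * A) < 1.
  by move: TA; rewrite -[(2 * A)^-1]div1r ltr_pdivlMr ?mulr_gt0.
have LcA : L * c <= A.
  rewrite /A -[X in X <= _]mulr1; apply: ler_wpM2l; first by rewrite mulr_ge0 ?ltW.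
  have := ltW KM0; lra.
have TLc : T * (L * c) <= T * A by apply: ler_wpM2l; [exact: ltW | exact: LcA].
have TL : T * (L * c) <= 2^-1.
  rewrite -[2^-1]div1r ler_pdivlMr //; lra.
have TAr : T * (A * r) <= r.
  have h : T * A <= 1 by lra.
  rewrite mulrA -[X in _ <= X]mul1r; apply: ler_wpM2r => //.
have [z [z0 [zc [zd [zb ze]]]]] :=
  @picard R n g y (L * c) (A * r) T (ltW T0) (mulr_ge0 (ltW L0) (ltW c0))
    (mulr_ge0 (ltW A0) r0) TL gL gB.
have zin : forall t, `|z t - y| <= r by move=> t; apply: le_trans (zb t) TAr.
have ode : ode_sol f y u T z.
  split; first exact: z0.
  split; first exact: continuous_subspaceT.
  move=> t t0 tT; have := zd t t0 tT; by rewrite /g proj_id // zin.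
have FeE : Fe y u T = z T := Fex y u T z (ltW T0) ode.
have gy : g y = f y u by rewrite /g proj_id // subrr normr0.
rewrite gy in ze.
rewrite /FbarE /Fbare -/u FeE.
rewrite (subr_mid _ (y + T *: f y u)).
apply: le_trans (en_tri _ _) _; rewrite en_opp.
apply: lerD; first exact: PA.
have E : z T - (y + T *: f y u) = z T - y - T *: f y u by rewrite opprD addrA.
rewrite E; apply: le_trans (en_c _) _.
have h1 : c * `|z T - y - T *: f y u| <= c * (T * (L * c) * (T * (A * r))).
  by apply: ler_wpM2l; [exact: ltW | exact: ze].
apply: le_trans h1 _.
have -> : c * (T * (L * c) * (T * (A * r))) = T * (s * T) * r by rewrite /s; ring.
apply: ler_wpM2l; first by rewrite !mulr_ge0 ?ltW.
apply: le_trans ry _.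
by rewrite le_max lexx orbT.
Qed.
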